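(* Let $k\ge2$ and $n-k$ even. Let $[a_{ij}(x)]$ ($1\le i\le n$, $1\le j\le k$) be an $n\times k$ matrix of polynomials in $x\in\mathbb{R}^{n-k+1}$, and let $p\in\mathbb{R}^{n-k+1}$ be a point where its columns are linearly dependent and $m(p)\ne0$. Let $\bar\lambda=(\bar\lambda_2,\ldots,\bar\lambda_k)$ be the unique vector with $\sum_{j}a_{ij}(p)\lambda_j=0$ for all $i$ (with $\lambda_1=1$). If $\delta(p)\ne0$, then $(\bar\lambda,p)$ is an isolated zero of $F:\mathbb{R}^{k-1}\times\mathbb{R}^{n-k+1}\to\mathbb{R}^n$ and $$\deg_{(\bar\lambda,p)}F=(-1)^{k-1}\operatorname{sgn}\delta(p).$$
   Context: $m(x)=\det[a_{ij}(x)]_{1\le i\le k-1,\,2\le j\le k}$. $F=(F_1,\ldots,F_n)$ with $F_i(\lambda,x)=a_{i1}(x)+\lambda_2a_{i2}(x)+\cdots+\lambda_ka_{ik}(x)$ for $\lambda=(\lambda_2,\ldots,\lambda_k)\in\mathbb{R}^{k-1}$. For $k\le i\le n$, $\Delta_i(x)$ is the determinant of the $k\times k$ matrix formed by rows $1,\ldots,k-1$ and $i$ of $[a_{ij}(x)]$, and $\delta=\det\,\partial(\Delta_k,\ldots,\Delta_n)/\partial(x_1,\ldots,x_{n-k+1})$. $\deg_q$ denotes the local topological degree at an isolated zero $q$, with $\mathbb{R}^{k-1}\times\mathbb{R}^{n-k+1}$ and $\mathbb{R}^n$ standardly oriented. *)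

(* Defs.v *)
From Stdlib Require Import Reals ZArith List Arith.
Open Scope R_scope.

Inductive mpoly : Type :=
| PC (c : R)
| PX (i : nat)
| PAdd (p q : mpoly)
| PMul (p q : mpoly)
| POpp (p : mpoly).

Fixpoint peval (x : nat -> R) (p : mpoly) : R :=
  match p with
  | PC c => c
  | PX i => x i
  | PAdd p q => peval x p + peval x q
  | PMul p q => peval x p * peval x q
  | POpp p => - peval x p
  end.

Fixpoint pderiv (i : nat) (p : mpoly) : mpoly :=
  match p with
  | PC _ => PC 0
  | PX j => if Nat.eqb i j then PC 1 else PC 0
  | PAdd p q => PAdd (pderiv i p) (pderiv i q)
  | PMul p q => PAdd (PMul (pderiv i p) q) (PMul p (pderiv i q))
  | POpp p => POpp (pderiv i p)
  end.

Fixpoint prename (f : nat -> nat) (p : mpoly) : mpoly :=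
  match p with
  | PC c => PC c
  | PX j => PX (f j)
  | PAdd p q => PAdd (prename f p) (prename f q)
  | PMul p q => PMul (prename f p) (prename f q)
  | POpp p => POpp (prename f p)
  end.

Fixpoint poly_in (N : nat) (p : mpoly) : Prop :=
  match p with
  | PC _ => True
  | PX j => (j < N)%nat
  | PAdd p q => poly_in N p /\ poly_in N q
  | PMul p q => poly_in N p /\ poly_in N q
  | POpp p => poly_in N p
  end.

(** generic finite sums and determinants (Laplace expansion along row 0),
    matrices are functions nat -> nat -> T, indices 0-based *)
Fixpoint gsum {T : Type} (add : T -> T -> T) (zero : T) (n : nat) (f : nat -> T) : T :=
  match n with
  | O => zero
  | S m => add (gsum add zero m f) (f m)
  end.

Definition minor {T : Type} (A : nat -> nat -> T) (j : nat) : nat -> nat -> T :=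
  fun r c => A (S r) (if Nat.ltb c j then c else S c).

Fixpoint gdet {T : Type} (add mul : T -> T -> T) (opp : T -> T) (zero one : T)
  (n : nat) (A : nat -> nat -> T) : T :=
  match n with
  | O => one
  | S m => gsum add zero (S m) (fun j =>
             let t := mul (A O j) (gdet add mul opp zero one m (minor A j)) in
             if Nat.even j then t else opp t)
  end.

Definition Rsum (n : nat) (f : nat -> R) : R := gsum Rplus 0 n f.
Definition Rdet (n : nat) (A : nat -> nat -> R) : R := gdet Rplus Rmult Ropp 0 1 n A.
Definition Pdet (n : nat) (A : nat -> nat -> mpoly) : mpoly :=
  gdet PAdd PMul POpp (PC 0) (PC 1) n A.

Definition sgnZ (x : R) : Z :=
  if Rlt_dec 0 x then 1%Z else if Rlt_dec x 0 then (-1)%Z else 0%Z.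

(** points of R^n are represented by nat -> R, only coordinates < n matter *)
Definition eqv (n : nat) (z w : nat -> R) : Prop := forall t, (t < n)%nat -> z t = w t.
Definition dist2 (n : nat) (z w : nat -> R) : R := Rsum n (fun t => (z t - w t) ^ 2).

(** a polynomial map G : R^n -> R^n has components G 0, ..., G (n-1) *)
Definition is_zero_of (n : nat) (G : nat -> mpoly) (z : nat -> R) : Prop :=
  forall i, (i < n)%nat -> peval z (G i) = 0.

Definition solves (n : nat) (G : nat -> mpoly) (y z : nat -> R) : Prop :=
  forall i, (i < n)%nat -> peval z (G i) = y i.

Definition jac (n : nat) (G : nat -> mpoly) (z : nat -> R) : R :=
  Rdet n (fun i j => peval z (pderiv j (G i))).

Definition isolated_zero (n : nat) (G : nat -> mpoly) (q : nat -> R) : Prop :=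
  is_zero_of n G q /\
  exists r, 0 < r /\
    forall z, dist2 n z q < r ^ 2 -> is_zero_of n G z -> eqv n z q.

(** Local (Brouwer) degree of G at the isolated zero q, analytic definition:
    choose a ball B(q,r) whose closure contains no other zero; for every
    regular value y of G on B(q,r) sufficiently close to 0, the degree is
    the sum over the (finitely many) solutions z in B(q,r) of G z = y of
    sgn det DG(z). *)
Definition local_degree (n : nat) (G : nat -> mpoly) (q : nat -> R) (d : Z) : Prop :=
  exists r, 0 < r /\
    (forall z, dist2 n z q <= r ^ 2 -> is_zero_of n G z -> eqv n z q) /\
    exists eps, 0 < eps /\
      forall y : nat -> R,
        dist2 n y (fun _ => 0) < eps ^ 2 ->
        (forall z, dist2 n z q < r ^ 2 -> solves n G y z -> jac n G z <> 0) ->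
        forall zs : list (nat -> R),
          (forall z, (dist2 n z q < r ^ 2 /\ solves n G y z) <->
                     exists w, In w zs /\ eqv n z w) ->
          ForallOrdPairs (fun u v => ~ eqv n u v) zs ->
          fold_right (fun z acc => (sgnZ (jac n G z) + acc)%Z) 0%Z zs = d.

(** ---- the objects of the paper (0-based indices) ----
    a i j, i < n, j < k : entries of the n x k polynomial matrix in
    x = (X_0, ..., X_(n-k)).  *)

(** m(x) = det [a_ij]_{rows 1..k-1, cols 2..k} *)
Definition m_poly (k : nat) (a : nat -> nat -> mpoly) : mpoly :=
  Pdet (k - 1) (fun r c => a r (S c)).

(** Delta_i (paper index i in k..n, here 0-based row index i in k-1..n-1):
    det of the k x k matrix of rows 1..k-1 and row i *)
Definition Delta (k : nat) (a : nat -> nat -> mpoly) (i : nat) : mpoly :=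
  Pdet k (fun r c => a (if Nat.ltb r (k - 1) then r else i) c).

(** delta = det d(Delta_k,...,Delta_n)/d(x_1,...,x_(n-k+1)) *)
Definition delta_poly (n k : nat) (a : nat -> nat -> mpoly) : mpoly :=
  Pdet (n - k + 1) (fun r c => pderiv c (Delta k a (k - 1 + r))).

(** F_i(lambda, x) as a polynomial in n variables: variables X_0..X_(k-2)
    are lambda_2..lambda_k, variables X_(k-1)..X_(n-1) are x_1..x_(n-k+1). *)
Definition F_poly (k : nat) (a : nat -> nat -> mpoly) (i : nat) : mpoly :=
  let sh := prename (fun t => (t + (k - 1))%nat) in
  PAdd (sh (a i O))
       (gsum PAdd (PC 0) (k - 1) (fun j => PMul (PX j) (sh (a i (S j))))).

(** the point (lambda, p) of R^(k-1) x R^(n-k+1) = R^n *)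
Definition join_pt (k : nat) (lam p : nat -> R) : nat -> R :=
  fun t => if Nat.ltb t (k - 1) then lam t else p (t - (k - 1))%nat.

(* Main.v *)
Require Import Defs.
From Stdlib Require Import Reals ZArith List Arith.
Open Scope R_scope.
From Stdlib Require Import Lra Lia Psatz.


Lemma Rs_S n f : Rsum (S n) f = Rsum n f + f n.
Proof. reflexivity. Qed.
Lemma Rs_0 f : Rsum 0 f = 0.
Proof. reflexivity. Qed.

Lemma Rs_ext n f g : (forall i, (i < n)%nat -> f i = g i) -> Rsum n f = Rsum n g.
Proof.
  induction n; intros H. reflexivity.
  rewrite !Rs_S. rewrite IHn by (intros; apply H; lia). rewrite H by lia. reflexivity.
Qed.

Lemma Rs_plus n f g : Rsum n (fun i => f i + g i) = Rsum n f + Rsum n g.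
Proof. induction n. simpl. unfold Rsum; simpl; ring. rewrite !Rs_S, IHn. ring. Qed.

Lemma Rs_scal n c f : Rsum n (fun i => c * f i) = c * Rsum n f.
Proof. induction n. unfold Rsum; simpl; ring. rewrite !Rs_S, IHn. ring. Qed.

Lemma Rs_opp n f : Rsum n (fun i => - f i) = - Rsum n f.
Proof. induction n. unfold Rsum; simpl; ring. rewrite !Rs_S, IHn. ring. Qed.

Lemma Rs_minus n f g : Rsum n (fun i => f i - g i) = Rsum n f - Rsum n g.
Proof. induction n. unfold Rsum; simpl; ring. rewrite !Rs_S, IHn. ring. Qed.

Lemma Rs_zero n f : (forall i, (i < n)%nat -> f i = 0) -> Rsum n f = 0.
Proof.
  intros H. transitivity (Rsum n (fun _ => 0)). apply Rs_ext; auto.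
  induction n. reflexivity. rewrite Rs_S, IHn. ring. intros; apply H; lia.
Qed.

Lemma Rs_S_l n f : Rsum (S n) f = f 0%nat + Rsum n (fun i => f (S i)).
Proof.
  induction n. unfold Rsum; simpl; ring.
  rewrite Rs_S, IHn, Rs_S. ring.
Qed.

Lemma Rs_swap n m f :
  Rsum n (fun i => Rsum m (fun j => f i j)) = Rsum m (fun j => Rsum n (fun i => f i j)).
Proof.
  induction n. rewrite Rs_0. symmetry; apply Rs_zero; intros; reflexivity.
  rewrite Rs_S, IHn, <- Rs_plus. apply Rs_ext; intros. rewrite Rs_S. reflexivity.
Qed.

Lemma Rs_delta n j f : (j < n)%nat ->
  Rsum n (fun i => if Nat.eqb i j then f i else 0) = f j.
Proof.
  induction n; intros H. lia.
  rewrite Rs_S. destruct (Nat.eq_dec j n).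
  - subst. rewrite Nat.eqb_refl. rewrite Rs_zero. ring.
    intros i Hi. destruct (Nat.eqb_spec i n). lia. reflexivity.
  - rewrite IHn by lia. destruct (Nat.eqb_spec n j). lia. ring.
Qed.

Lemma Rs_abs n f : Rabs (Rsum n f) <= Rsum n (fun i => Rabs (f i)).
Proof.
  induction n. unfold Rsum; simpl. rewrite Rabs_R0; lra.
  rewrite !Rs_S. eapply Rle_trans. apply Rabs_triang. lra.
Qed.

Lemma Rs_le n f g : (forall i, (i < n)%nat -> f i <= g i) -> Rsum n f <= Rsum n g.
Proof.
  induction n; intros H. unfold Rsum; simpl; lra.
  rewrite !Rs_S. assert (f n <= g n) by (apply H; lia).
  assert (Rsum n f <= Rsum n g) by (apply IHn; intros; apply H; lia). lra.
Qed.

Lemma Rs_nonneg n f : (forall i, (i < n)%nat -> 0 <= f i) -> 0 <= Rsum n f.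
Proof.
  intros H. replace 0 with (Rsum n (fun _ => 0)). apply Rs_le; auto.
  apply Rs_zero; auto.
Qed.

Lemma Rs_term_le n f j : (forall i, (i < n)%nat -> 0 <= f i) -> (j < n)%nat -> f j <= Rsum n f.
Proof.
  induction n; intros H Hj. lia.
  rewrite Rs_S. destruct (Nat.eq_dec j n).
  - subst. assert (0 <= Rsum n f) by (apply Rs_nonneg; intros; apply H; lia). lra.
  - assert (f j <= Rsum n f) by (apply IHn; [intros; apply H; lia| lia]).
    assert (0 <= f n) by (apply H; lia). lra.
Qed.

Lemma Rs_const n c : Rsum n (fun _ => c) = INR n * c.
Proof. induction n. unfold Rsum; simpl; ring. rewrite Rs_S, IHn, S_INR. ring. Qed.

Lemma peval_ext x y P : (forall i, x i = y i) -> peval x P = peval y P.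
Proof. intros H; induction P; simpl; try rewrite IHP1, IHP2; try rewrite IHP; auto. Qed.

Lemma peval_gsum x n f : peval x (gsum PAdd (PC 0) n f) = Rsum n (fun i => peval x (f i)).
Proof. induction n. reflexivity. simpl. rewrite IHn. reflexivity. Qed.

Lemma peval_pderiv_gsum x l n f :
  peval x (pderiv l (gsum PAdd (PC 0) n f)) = Rsum n (fun i => peval x (pderiv l (f i))).
Proof. induction n. reflexivity. simpl. rewrite IHn. reflexivity. Qed.

Lemma Pdet_S m A : Pdet (S m) A = gsum PAdd (PC 0) (S m) (fun j =>
  let t := PMul (A O j) (Pdet m (minor A j)) in if Nat.even j then t else POpp t).
Proof. reflexivity. Qed.

Lemma Rdet_S m A : Rdet (S m) A = Rsum (S m) (fun j =>
  let t := A O j * Rdet m (minor A j) in if Nat.even j then t else - t).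
Proof. reflexivity. Qed.

Definition sg (j : nat) : R := if Nat.even j then 1 else -1.
Lemma sg_if j t : (if Nat.even j then t else - t) = sg j * t.
Proof. unfold sg; destruct (Nat.even j); ring. Qed.

Lemma peval_Pdet n : forall A x, peval x (Pdet n A) = Rdet n (fun i j => peval x (A i j)).
Proof.
  induction n; intros A x. reflexivity.
  rewrite Pdet_S, peval_gsum, Rdet_S. apply Rs_ext; intros j _.
  destruct (Nat.even j); simpl; rewrite IHn; reflexivity.
Qed.

Lemma Rdet_ext n : forall A B, (forall i j, (i < n)%nat -> (j < n)%nat -> A i j = B i j) ->
  Rdet n A = Rdet n B.
Proof.
  induction n; intros A B H. reflexivity.
  rewrite !Rdet_S. apply Rs_ext; intros j Hj. cbv zeta.
  rewrite (IHn (minor A j) (minor B j)). rewrite H by lia. reflexivity.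
  intros r c Hr Hc. unfold minor. apply H. lia.
  destruct (Nat.ltb c j); lia.
Qed.

Lemma Rdet_scal n : forall c A, Rdet n (fun i j => c * A i j) = c ^ n * Rdet n A.
Proof.
  induction n; intros c A. unfold Rdet; simpl; ring.
  rewrite !Rdet_S. rewrite <- Rs_scal. apply Rs_ext; intros j Hj. cbv zeta.
  rewrite !sg_if. 
  replace (Rdet n (minor (fun i j0 : nat => c * A i j0) j)) with (Rdet n (fun r s => c * minor A j r s)) by reflexivity.
  rewrite (IHn c (minor A j)). simpl. ring.
Qed.

Lemma Rdet_1 A : Rdet 1 A = A 0%nat 0%nat.
Proof. unfold Rdet; simpl. ring. Qed.

Lemma peval_pderiv_Pdet n : forall A x l,
  peval x (pderiv l (Pdet n A)) =
  Rsum n (fun s => Rdet n (fun i j => if Nat.eqb i s then peval x (pderiv l (A i j)) else peval x (A i j))).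
Proof.
  induction n; intros A x l. reflexivity.
  rewrite Rs_S_l. cbv beta. rewrite Rdet_S.
  rewrite Pdet_S, peval_pderiv_gsum.
  transitivity (Rsum (S n) (fun j => sg j * (peval x (pderiv l (A 0%nat j)) * Rdet n (fun r c => peval x (minor A j r c))))
     + Rsum (S n) (fun j => sg j * (peval x (A 0%nat j) * Rsum n (fun s => Rdet n (fun r c =>
          if Nat.eqb r s then peval x (pderiv l (minor A j r c)) else peval x (minor A j r c)))))).
  { rewrite <- Rs_plus. apply Rs_ext; intros j _.
    cbv zeta. destruct (Nat.even j) eqn:E; unfold sg; rewrite E; simpl;
    rewrite peval_Pdet, IHn; ring. }
  f_equal.
  { apply Rs_ext; intros j _. cbv zeta. rewrite sg_if. f_equal. }
  transitivity (Rsum n (fun s => Rsum (S n) (fun j => sg j * (peval x (A 0%nat j) * Rdet n (fun r c =>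
          if Nat.eqb r s then peval x (pderiv l (minor A j r c)) else peval x (minor A j r c)))))).
  { rewrite Rs_swap. apply Rs_ext; intros j _. rewrite <- !Rs_scal. apply Rs_ext; intros. ring. }
  apply Rs_ext; intros s _. rewrite Rdet_S. apply Rs_ext; intros j _. cbv zeta.
  rewrite sg_if. simpl. reflexivity.
Qed.


Definition nrm (N : nat) (v : nat -> R) : R := Rsum N (fun t => Rabs (v t)).
Definition dv (z w : nat -> R) : nat -> R := fun t => z t - w t.

Lemma nrm_nonneg N v : 0 <= nrm N v.
Proof. apply Rs_nonneg; intros; apply Rabs_pos. Qed.

Lemma nrm_sym N z w : nrm N (dv z w) = nrm N (dv w z).
Proof. apply Rs_ext; intros; unfold dv. apply Rabs_minus_sym. Qed.

Lemma nrm_tri N z w u : nrm N (dv z u) <= nrm N (dv z w) + nrm N (dv w u).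
Proof.
  unfold nrm. rewrite <- Rs_plus. apply Rs_le; intros. unfold dv.
  replace (z i - u i) with ((z i - w i) + (w i - u i)) by ring. apply Rabs_triang.
Qed.

Lemma nrm_self N z : nrm N (dv z z) = 0.
Proof. apply Rs_zero; intros; unfold dv. replace (z i - z i) with 0 by ring. apply Rabs_R0. Qed.

Lemma coord_le_nrm N v t : (t < N)%nat -> Rabs (v t) <= nrm N v.
Proof. intros H; apply (Rs_term_le N (fun t => Rabs (v t))); [intros; apply Rabs_pos | exact H]. Qed.

Lemma nrm_ext N v w : (forall t, (t < N)%nat -> v t = w t) -> nrm N v = nrm N w.
Proof. intros H; apply Rs_ext; intros; rewrite H; auto. Qed.

Lemma nrm_zero_eqv N z w : nrm N (dv z w) <= 0 -> eqv N z w.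
Proof.
  intros H t Ht. assert (Rabs (dv z w t) <= nrm N (dv z w)) by (apply coord_le_nrm; auto).
  change (dv z w t) with (z t - w t) in H0. assert (Rabs (z t - w t) = 0) by (pose proof (Rabs_pos (z t - w t)); lra).
  destruct (Req_dec (z t) (w t)); auto. exfalso; apply (Rabs_no_R0 (z t - w t)); auto; lra.
Qed.

Lemma lin_bound N a v : Rabs (Rsum N (fun t => a t * v t)) <= Rsum N (fun t => Rabs (a t)) * nrm N v.
Proof.
  eapply Rle_trans. apply Rs_abs. unfold nrm. rewrite <- Rs_scal. apply Rs_le; intros.
  rewrite Rabs_mult. apply Rmult_le_compat_r. apply Rabs_pos.
  apply (Rs_term_le N (fun t => Rabs (a t))); [intros; apply Rabs_pos | assumption].
Qed.

Lemma abs_mul_le x y X Y : Rabs x <= X -> Rabs y <= Y -> Rabs (x * y) <= X * Y.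
Proof.
  intros. rewrite Rabs_mult. apply Rmult_le_compat; auto; apply Rabs_pos.
Qed.

Definition TaylorC N q P C := forall z w, nrm N (dv z q) <= 1 -> nrm N (dv w q) <= 1 ->
  Rabs (peval z P - peval w P - Rsum N (fun t => peval q (pderiv t P) * (z t - w t)))
   <= C * (nrm N (dv z q) + nrm N (dv w q)) * nrm N (dv z w).

Definition gradn N q P := Rsum N (fun t => Rabs (peval q (pderiv t P))).

Lemma gradn_nonneg N q P : 0 <= gradn N q P.
Proof. apply Rs_nonneg; intros; apply Rabs_pos. Qed.

Lemma lip_of_taylor N q P C : 0 <= C -> TaylorC N q P C ->
  forall z w, nrm N (dv z q) <= 1 -> nrm N (dv w q) <= 1 ->
  Rabs (peval z P - peval w P) <= (gradn N q P + 2 * C) * nrm N (dv z w).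
Proof.
  intros HC HT z w Hz Hw. specialize (HT z w Hz Hw).
  pose proof (lin_bound N (fun t => peval q (pderiv t P)) (dv z w)) as HL.
  set (L := Rsum N (fun t => peval q (pderiv t P) * (z t - w t))) in *.
  assert (Rsum N (fun t => peval q (pderiv t P) * dv z w t) = L) as E by reflexivity.
  cbv beta in HL. change (Rsum N (fun t => peval q (pderiv t P) * dv z w t)) with L in HL. fold (gradn N q P) in HL.
  pose proof (nrm_nonneg N (dv z w)). pose proof (nrm_nonneg N (dv z q)). pose proof (nrm_nonneg N (dv w q)).
  replace (peval z P - peval w P) with ((peval z P - peval w P - L) + L) by ring.
  eapply Rle_trans. apply Rabs_triang.
  assert (C * (nrm N (dv z q) + nrm N (dv w q)) * nrm N (dv z w) <= 2 * C * nrm N (dv z w)).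
  { apply Rmult_le_compat_r; auto. nra. }
  nra.
Qed.

Lemma bound_of_taylor N q P C : 0 <= C -> TaylorC N q P C ->
  forall z, nrm N (dv z q) <= 1 -> Rabs (peval z P) <= Rabs (peval q P) + (gradn N q P + 2 * C).
Proof.
  intros HC HT z Hz. assert (nrm N (dv q q) <= 1) by (rewrite nrm_self; lra).
  pose proof (lip_of_taylor N q P C HC HT z q Hz H).
  pose proof (gradn_nonneg N q P).
  assert ((gradn N q P + 2 * C) * nrm N (dv z q) <= gradn N q P + 2 * C).
  { rewrite <- (Rmult_1_r (gradn N q P + 2 * C)) at 2. apply Rmult_le_compat_l; lra. }
  replace (peval z P) with ((peval z P - peval q P) + peval q P) by ring.
  eapply Rle_trans. apply Rabs_triang. lra.
Qed.

Lemma taylor N q P : poly_in N P -> exists C, 0 <= C /\ TaylorC N q P C.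
Proof.
  induction P; simpl; intros HP.
  - exists 0. split. lra. intros z w _ _. simpl.
    rewrite Rs_zero. replace (c - c - 0) with 0 by ring. rewrite Rabs_R0. lra.
    intros; simpl; ring.
  - exists 0. split. lra. intros z w _ _. simpl.
    rewrite (Rs_ext N _ (fun t => if Nat.eqb t i then (z t - w t) else 0)).
    rewrite Rs_delta by auto. replace (z i - w i - (z i - w i)) with 0 by ring. rewrite Rabs_R0. lra.
    intros t _. destruct (Nat.eqb t i); simpl; ring.
  - destruct HP as [H1 H2]. destruct (IHP1 H1) as [C1 [HC1 T1]]. destruct (IHP2 H2) as [C2 [HC2 T2]].
    exists (C1 + C2). split. lra. intros z w Hz Hw. specialize (T1 z w Hz Hw). specialize (T2 z w Hz Hw).
    simpl. rewrite (Rs_ext N _ (fun t => peval q (pderiv t P1) * (z t - w t) + peval q (pderiv t P2) * (z t - w t))).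
    rewrite Rs_plus.
    match goal with |- Rabs ?e <= _ => replace e with
      ((peval z P1 - peval w P1 - Rsum N (fun t => peval q (pderiv t P1) * (z t - w t))) +
       (peval z P2 - peval w P2 - Rsum N (fun t => peval q (pderiv t P2) * (z t - w t)))) by ring end.
    eapply Rle_trans. apply Rabs_triang. lra.
    intros; simpl; ring.
  - destruct HP as [H1 H2]. destruct (IHP1 H1) as [C1 [HC1 T1]]. destruct (IHP2 H2) as [C2 [HC2 T2]].
    assert (HC1' := HC1). assert (HC2' := HC2).
    assert (0 <= gradn N q P1) by apply gradn_nonneg. assert (0 <= gradn N q P2) by apply gradn_nonneg.
    pose proof (Rabs_pos (peval q P1)). pose proof (Rabs_pos (peval q P2)).
    exists ((Rabs (peval q P1) + (gradn N q P1 + 2 * C1)) * C2 + (Rabs (peval q P2) + (gradn N q P2 + 2 * C2)) * C1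
       + (gradn N q P1 + 2 * C1) * gradn N q P2 + (gradn N q P2 + 2 * C2) * gradn N q P1). split.
    { nra. }
    intros z w Hz Hw.
    assert (nrm N (dv q q) <= 1) as Hq by (rewrite nrm_self; lra).
    pose proof (T1 z w Hz Hw) as Ta. pose proof (T2 z w Hz Hw) as Tb.
    pose proof (bound_of_taylor N q P1 C1 HC1 T1 z Hz) as Ba.
    pose proof (bound_of_taylor N q P2 C2 HC2 T2 w Hw) as Bb.
    pose proof (lip_of_taylor N q P1 C1 HC1 T1 z q Hz Hq) as La.
    pose proof (lip_of_taylor N q P2 C2 HC2 T2 w q Hw Hq) as Lb.
    pose proof (lin_bound N (fun t => peval q (pderiv t P1)) (dv z w)) as Ia.
    pose proof (lin_bound N (fun t => peval q (pderiv t P2)) (dv z w)) as Ib.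
    cbv beta in Ia, Ib. fold (gradn N q P1) (gradn N q P2) in Ia, Ib.
    set (B1 := Rabs (peval q P1) + (gradn N q P1 + 2 * C1)) in *.
    set (B2 := Rabs (peval q P2) + (gradn N q P2 + 2 * C2)) in *.
    set (L1 := gradn N q P1 + 2 * C1) in *. set (L2 := gradn N q P2 + 2 * C2) in *.
    set (A1 := gradn N q P1) in *. set (A2 := gradn N q P2) in *.
    assert (0 <= B1) by (unfold B1, L1; lra). assert (0 <= B2) by (unfold B2, L2; lra).
    set (Lp := Rsum N (fun t => peval q (pderiv t P1) * (z t - w t))) in *.
    set (Lq := Rsum N (fun t => peval q (pderiv t P2) * (z t - w t))) in *.
    change (Rsum N (fun t => peval q (pderiv t P1) * dv z w t)) with Lp in Ia.
    change (Rsum N (fun t => peval q (pderiv t P2) * dv z w t)) with Lq in Ib.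
    simpl.
    rewrite (Rs_ext N _ (fun t => peval q P2 * (peval q (pderiv t P1) * (z t - w t)) +
                                   peval q P1 * (peval q (pderiv t P2) * (z t - w t)))).
    2:{ intros; simpl; ring. }
    rewrite Rs_plus, !Rs_scal. fold Lp Lq.
    set (a := peval z P1) in *. set (a' := peval w P1) in *.
    set (b := peval z P2) in *. set (b' := peval w P2) in *.
    set (P0 := peval q P1) in *. set (Q0 := peval q P2) in *.
    set (e1 := nrm N (dv z q)) in *. set (e2 := nrm N (dv w q)) in *. set (d := nrm N (dv z w)) in *.
    assert (0 <= e1) by apply nrm_nonneg. assert (0 <= e2) by apply nrm_nonneg. assert (0 <= d) by apply nrm_nonneg.
    replace (a * b - a' * b' - (Q0 * Lp + P0 * Lq)) with
      (a * (b - b' - Lq) + (a - P0) * Lq + b' * (a - a' - Lp) + (b' - Q0) * Lp) by ring.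
    assert (R1 : Rabs (a * (b - b' - Lq)) <= B1 * (C2 * (e1 + e2) * d)) by (apply abs_mul_le; auto).
    assert (R2 : Rabs ((a - P0) * Lq) <= (L1 * e1) * (A2 * d)) by (apply abs_mul_le; auto).
    assert (R3 : Rabs (b' * (a - a' - Lp)) <= B2 * (C1 * (e1 + e2) * d)) by (apply abs_mul_le; auto).
    assert (R4 : Rabs ((b' - Q0) * Lp) <= (L2 * e2) * (A1 * d)) by (apply abs_mul_le; auto).
    eapply Rle_trans. apply Rabs_triang. eapply Rle_trans. apply Rplus_le_compat_r. apply Rabs_triang.
    eapply Rle_trans. apply Rplus_le_compat_r. apply Rplus_le_compat_r. apply Rabs_triang.
    assert (0 <= L1) by (unfold L1; lra). assert (0 <= L2) by (unfold L2; lra).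
    assert (L1 * A2 * d * e1 <= L1 * A2 * d * (e1 + e2)) by (apply Rmult_le_compat_l; [ apply Rmult_le_pos; [apply Rmult_le_pos|]; auto | lra]).
    assert (L2 * A1 * d * e2 <= L2 * A1 * d * (e1 + e2)) by (apply Rmult_le_compat_l; [ apply Rmult_le_pos; [apply Rmult_le_pos|]; auto | lra]).
    nra.
  - destruct (IHP HP) as [C [HC T]]. exists C. split; auto. intros z w Hz Hw. specialize (T z w Hz Hw).
    simpl. rewrite (Rs_ext N _ (fun t => - (peval q (pderiv t P) * (z t - w t)))).
    rewrite Rs_opp.
    match goal with |- Rabs ?e <= _ => replace e with
      (- (peval z P - peval w P - Rsum N (fun t => peval q (pderiv t P) * (z t - w t)))) by ring end.
    rewrite Rabs_Ropp. auto.
    intros; simpl; ring.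
Qed.


Lemma poly_in_gsum N n f : (forall i, (i < n)%nat -> poly_in N (f i)) -> poly_in N (gsum PAdd (PC 0) n f).
Proof. induction n; intros H; simpl; auto. split; auto. Qed.

Lemma poly_in_pderiv N t P : poly_in N P -> poly_in N (pderiv t P).
Proof. induction P; simpl; intuition. destruct (Nat.eqb t i); simpl; auto. Qed.

Lemma poly_in_Pdet N n : forall A, (forall i j, (i < n)%nat -> (j < n)%nat -> poly_in N (A i j)) ->
  poly_in N (Pdet n A).
Proof.
  induction n; intros A H. simpl; auto.
  rewrite Pdet_S. apply poly_in_gsum. intros j Hj. cbv zeta.
  assert (poly_in N (PMul (A 0%nat j) (Pdet n (minor A j)))).
  { simpl. split. apply H; lia. apply IHn. intros r c Hr Hc. unfold minor. apply H. lia.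
    destruct (Nat.ltb c j); lia. }
  destruct (Nat.even j); simpl in *; auto.
Qed.

Definition Mn N (M : nat -> nat -> R) := Rsum N (fun t => Rsum N (fun i => Rabs (M t i))).

Lemma Mn_nonneg N M : 0 <= Mn N M.
Proof. apply Rs_nonneg; intros; apply Rs_nonneg; intros; apply Rabs_pos. Qed.

Lemma mat_bound N M u : nrm N (fun t => Rsum N (fun i => M t i * u i)) <= Mn N M * nrm N u.
Proof.
  unfold nrm at 1, Mn. rewrite Rmult_comm, <- Rs_scal. apply Rs_le; intros t _.
  rewrite Rmult_comm. apply lin_bound.
Qed.

Definition Tmap N (M : nat -> nat -> R) (G : nat -> mpoly) (y z : nat -> R) : nat -> R :=
  fun t => z t - Rsum N (fun i => M t i * (peval z (G i) - y i)).

Definition Jm (G : nat -> mpoly) (q : nat -> R) : nat -> nat -> R := fun i t => peval q (pderiv t (G i)).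

Lemma T_diff N M G q C y z w :
  (forall i j, (i < N)%nat -> (j < N)%nat -> Rsum N (fun t => M i t * Jm G q t j) = if Nat.eqb i j then 1 else 0) ->
  (forall i, (i < N)%nat -> TaylorC N q (G i) C) -> 0 <= C ->
  nrm N (dv z q) <= 1 -> nrm N (dv w q) <= 1 ->
  nrm N (dv (Tmap N M G y z) (Tmap N M G y w)) <=
    Mn N M * (INR N * (C * (nrm N (dv z q) + nrm N (dv w q)) * nrm N (dv z w))).
Proof.
  intros HMJ HT HC Hz Hw.
  set (Rr := fun i => peval z (G i) - peval w (G i) - Rsum N (fun s => Jm G q i s * (z s - w s))).
  rewrite (nrm_ext N _ (fun t => - Rsum N (fun i => M t i * Rr i))).
  - eapply Rle_trans. 2:{ apply Rmult_le_compat_l. apply Mn_nonneg.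
      apply (Rle_trans _ (Rsum N (fun i => C * (nrm N (dv z q) + nrm N (dv w q)) * nrm N (dv z w)))).
      unfold nrm at 1. apply Rs_le. intros i Hi. apply (HT i Hi z w Hz Hw).
      rewrite Rs_const. lra. }
    eapply Rle_trans. 2: apply (mat_bound N M Rr).
    right. apply Rs_ext; intros. apply Rabs_Ropp.
  - intros t Ht. unfold dv, Tmap.
    assert (Rsum N (fun i => M t i * (peval z (G i) - y i)) - Rsum N (fun i => M t i * (peval w (G i) - y i))
            = Rsum N (fun i => M t i * Rr i) + (z t - w t)).
    { rewrite <- Rs_minus.
      rewrite (Rs_ext N _ (fun i => M t i * Rr i + Rsum N (fun s => M t i * Jm G q i s * (z s - w s)))).
      2:{ intros i _. unfold Rr.
          replace (Rsum N (fun s => M t i * Jm G q i s * (z s - w s))) with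
                  (M t i * Rsum N (fun s => Jm G q i s * (z s - w s))).
          ring. rewrite <- Rs_scal. apply Rs_ext; intros; ring. }
      rewrite Rs_plus. f_equal. rewrite Rs_swap.
      rewrite (Rs_ext N _ (fun s => if Nat.eqb s t then (z s - w s) else 0)).
      apply Rs_delta; auto.
      intros s Hs. rewrite (Rs_ext N _ (fun i => (z s - w s) * (M t i * Jm G q i s))) by (intros; ring).
      rewrite Rs_scal, HMJ by auto. rewrite Nat.eqb_sym. destruct (Nat.eqb s t); ring. }
    lra.
Qed.

Lemma T_q N M G q y : is_zero_of N G q ->
  nrm N (dv (Tmap N M G y q) q) <= Mn N M * nrm N y.
Proof.
  intros Hq. rewrite (nrm_ext N _ (fun t => Rsum N (fun i => M t i * y i))). apply mat_bound.
  intros t Ht. unfold dv, Tmap.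
  replace (q t - Rsum N (fun i => M t i * (peval q (G i) - y i)) - q t) with
    (- Rsum N (fun i => M t i * (peval q (G i) - y i))) by ring.
  rewrite <- Rs_opp. apply Rs_ext; intros i Hi. rewrite Hq by auto. ring.
Qed.

Lemma T_fix N M G y z : solves N G y z -> forall t, (t < N)%nat -> Tmap N M G y z t = z t.
Proof.
  intros H t Ht. unfold Tmap. rewrite Rs_zero. ring. intros i Hi. rewrite H by auto. ring.
Qed.

Lemma fix_solves N M G q y z :
  (forall i j, (i < N)%nat -> (j < N)%nat -> Rsum N (fun t => Jm G q i t * M t j) = if Nat.eqb i j then 1 else 0) ->
  eqv N (Tmap N M G y z) z -> solves N G y z.
Proof.
  intros HJM Hf i0 Hi0.
  assert (forall t, (t < N)%nat -> Rsum N (fun i => M t i * (peval z (G i) - y i)) = 0).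
  { intros t Ht. specialize (Hf t Ht). unfold Tmap in Hf. lra. }
  assert (Rsum N (fun t => Jm G q i0 t * Rsum N (fun i => M t i * (peval z (G i) - y i))) = 0).
  { apply Rs_zero. intros t Ht. rewrite H by auto. ring. }
  rewrite (Rs_ext N _ (fun t => Rsum N (fun i => Jm G q i0 t * M t i * (peval z (G i) - y i)))) in H0.
  2:{ intros. rewrite <- Rs_scal. apply Rs_ext; intros; ring. }
  rewrite Rs_swap in H0.
  rewrite (Rs_ext N _ (fun i => if Nat.eqb i i0 then (peval z (G i) - y i) else 0)) in H0.
  rewrite Rs_delta in H0 by auto. lra.
  intros i Hi. rewrite (Rs_ext N _ (fun t => (peval z (G i) - y i) * (Jm G q i0 t * M t i))) by (intros; ring).
  rewrite Rs_scal, HJM by auto. rewrite Nat.eqb_sym. destruct (Nat.eqb i i0); ring.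
Qed.


Lemma half_pow_pos m : 0 < (1/2) ^ m.
Proof. apply pow_lt; lra. Qed.

Lemma half_pow_le1 j : (1/2) ^ j <= 1.
Proof. induction j; simpl. lra. pose proof (half_pow_pos j). lra. Qed.

Lemma half_pow_mono m j : (1/2) ^ (m + j) <= (1/2) ^ m.
Proof.
  rewrite pow_add. pose proof (half_pow_pos m). pose proof (half_pow_le1 j).
  pose proof (half_pow_pos j). nra.
Qed.

Lemma half_pow_small c e : 0 < e -> exists N0, c * (1/2) ^ N0 < e.
Proof.
  intros He. destruct (Rle_lt_dec c 0).
  - exists 0%nat. simpl. lra.
  - destruct (pow_lt_1_zero (1/2)) with (y := e / c) as [N0 HN0].
    rewrite Rabs_right; lra. apply Rdiv_lt_0_compat; lra.
    exists N0. specialize (HN0 N0 (le_n _)). rewrite Rabs_right in HN0 by (left; apply half_pow_pos).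
    apply (Rmult_lt_compat_l c) in HN0; auto. replace (c * (e / c)) with e in HN0 by (field; lra). auto.
Qed.

Lemma vanish x a c : 0 <= c -> (forall m, x <= a + c * (1/2) ^ m) -> x <= a.
Proof.
  intros Hc H. apply Rle_plus_epsilon. intros e He.
  destruct (half_pow_small c e He) as [N0 HN0]. specialize (H N0). lra.
Qed.

Lemma vec_limit (U : nat -> nat -> R) K : 0 <= K ->
  (forall m j t, Rabs (U (m + j)%nat t - U m t) <= K * (1/2) ^ m) ->
  exists L : nat -> R, forall m t, Rabs (U m t - L t) <= K * (1/2) ^ m.
Proof.
  intros HK HU.
  assert (HC : forall t, Cauchy_crit (fun m => U m t)).
  { intros t e He. destruct (half_pow_small (2 * K) e He) as [N0 HN0].
    exists N0. intros n m Hn Hm. unfold Rdist.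
    replace n with (N0 + (n - N0))%nat by lia. replace m with (N0 + (m - N0))%nat by lia.
    pose proof (HU N0 (n - N0)%nat t). pose proof (HU N0 (m - N0)%nat t).
    replace (U (N0 + (n - N0))%nat t - U (N0 + (m - N0))%nat t) with
      ((U (N0 + (n - N0))%nat t - U N0 t) - (U (N0 + (m - N0))%nat t - U N0 t)) by ring.
    eapply Rle_lt_trans. apply Rabs_triang. rewrite Rabs_Ropp. lra. }
  exists (fun t => proj1_sig (R_complete _ (HC t))).
  intros m t. destruct (R_complete _ (HC t)) as [l Hl]. simpl.
  apply Rle_plus_epsilon. intros e He. destruct (Hl e He) as [N1 HN1].
  specialize (HN1 (m + N1)%nat ltac:(lia)). unfold Rdist in HN1.
  specialize (HU m N1 t).
  replace (U m t - l) with (-(U (m + N1)%nat t - U m t) + (U (m + N1)%nat t - l)) by ring.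
  eapply Rle_trans. apply Rabs_triang. rewrite Rabs_Ropp. lra.
Qed.

Lemma abs_le_of_sq a r : 0 <= r -> a ^ 2 <= r ^ 2 -> Rabs a <= r.
Proof.
  intros Hr H. rewrite <- pow2_abs in H. pose proof (Rabs_pos a).
  destruct (Rle_lt_dec (Rabs a) r); auto. nra.
Qed.

Lemma dist2_coord N z w r : 0 <= r -> dist2 N z w <= r ^ 2 -> forall t, (t < N)%nat -> Rabs (z t - w t) <= r.
Proof.
  intros Hr H t Ht. apply abs_le_of_sq; auto. eapply Rle_trans. 2: apply H.
  apply (Rs_term_le N (fun t => (z t - w t) ^ 2)); auto. intros; apply pow2_ge_0.
Qed.

Lemma nrm_le_of_dist2 N z w r : 0 <= r -> dist2 N z w <= r ^ 2 -> nrm N (dv z w) <= INR N * r.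
Proof.
  intros Hr H. rewrite <- Rs_const. apply Rs_le. intros t Ht. apply (dist2_coord N z w r); auto.
Qed.

Lemma dist2_le_nrm N z w : dist2 N z w <= (nrm N (dv z w)) ^ 2.
Proof.
  unfold dist2, nrm, dv. induction N. unfold Rsum; simpl; lra.
  rewrite !Rs_S. pose proof (Rs_nonneg N (fun t => Rabs (z t - w t)) (fun t _ => Rabs_pos _)).
  pose proof (Rabs_pos (z N - w N)). rewrite <- (pow2_abs (z N - w N)). nra.
Qed.

Lemma sgnZ_close a b : Rabs (a - b) < Rabs b -> sgnZ a = sgnZ b.
Proof.
  intros H. unfold sgnZ. unfold Rabs in H.
  destruct (Rcase_abs (a - b)), (Rcase_abs b);
  destruct (Rlt_dec 0 a), (Rlt_dec 0 b); try reflexivity;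
  destruct (Rlt_dec a 0), (Rlt_dec b 0); try reflexivity; lra.
Qed.


Lemma TaylorC_mono N q P C C' : C <= C' -> TaylorC N q P C -> TaylorC N q P C'.
Proof.
  intros HC T z w Hz Hw. specialize (T z w Hz Hw). eapply Rle_trans. apply T.
  pose proof (nrm_nonneg N (dv z q)). pose proof (nrm_nonneg N (dv w q)). pose proof (nrm_nonneg N (dv z w)).
  apply Rmult_le_compat_r; auto. apply Rmult_le_compat_r; lra.
Qed.

Lemma uniform_taylor N q G : (forall i, (i < N)%nat -> poly_in N (G i)) ->
  exists C, 0 <= C /\ forall i, (i < N)%nat -> TaylorC N q (G i) C.
Proof.
  intros H. assert (forall m, (m <= N)%nat -> exists C, 0 <= C /\ forall i, (i < m)%nat -> TaylorC N q (G i) C).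
  { induction m; intros Hm. exists 0. split. lra. intros; lia.
    destruct (IHm ltac:(lia)) as [C [HC HT]]. destruct (taylor N q (G m) (H m ltac:(lia))) as [C' [HC' HT']].
    exists (Rmax C C'). split. eapply Rle_trans. apply HC. apply Rmax_l.
    intros i Hi. destruct (Nat.eq_dec i m). subst. eapply TaylorC_mono. 2: apply HT'. apply Rmax_r.
    eapply TaylorC_mono. 2: apply HT; lia. apply Rmax_l. }
  apply H0. lia.
Qed.

Theorem local_deg_generic N G q M :
  (forall i, (i < N)%nat -> poly_in N (G i)) -> is_zero_of N G q -> jac N G q <> 0 ->
  (forall i j, (i < N)%nat -> (j < N)%nat -> Rsum N (fun t => M i t * Jm G q t j) = if Nat.eqb i j then 1 else 0) ->
  (forall i j, (i < N)%nat -> (j < N)%nat -> Rsum N (fun t => Jm G q i t * M t j) = if Nat.eqb i j then 1 else 0) ->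
  (forall t i, (N <= t)%nat -> M t i = 0) ->
  isolated_zero N G q /\ local_degree N G q (sgnZ (jac N G q)).
Proof.
  intros HG Hq Hjq HMJ HJM HM0.
  destruct (uniform_taylor N q G HG) as [C [HC HT]].
  set (PJ := Pdet N (fun i j => pderiv j (G i))).
  assert (HPJ : forall z, jac N G z = peval z PJ).
  { intros z. unfold jac, PJ. rewrite peval_Pdet. reflexivity. }
  assert (poly_in N PJ) as HPJin.
  { apply poly_in_Pdet. intros; apply poly_in_pderiv; auto. }
  destruct (taylor N q PJ HPJin) as [CJ [HCJ HTJ]].
  set (LJ := gradn N q PJ + 2 * CJ).
  assert (0 <= LJ) by (unfold LJ; pose proof (gradn_nonneg N q PJ); lra).
  assert (HlipJ : forall z, nrm N (dv z q) <= 1 -> Rabs (jac N G z - jac N G q) <= LJ * nrm N (dv z q)).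
  { intros z Hz. rewrite !HPJ. apply lip_of_taylor; auto. rewrite nrm_self; lra. }
  set (jq := jac N G q) in *.
  assert (0 < Rabs jq) by (apply Rabs_pos_lt; auto).
  set (Mn0 := Mn N M). assert (0 <= Mn0) by apply Mn_nonneg.
  set (nN := INR N). assert (0 <= nN) by apply pos_INR.
  set (X := Mn0 * nN * C). assert (0 <= X) by (unfold X; repeat apply Rmult_le_pos; auto).
  set (rho := Rmin 1 (Rmin (/ (4 * (X + 1))) (Rabs jq / (2 * (LJ + 1))))).
  assert (Hrho0 : 0 < rho).
  { unfold rho. apply Rmin_glb_lt. lra. apply Rmin_glb_lt. apply Rinv_0_lt_compat; lra.
    apply Rdiv_lt_0_compat; lra. }
  assert (Hrho1 : rho <= 1) by apply Rmin_l.
  assert (Hrho2 : rho * (4 * (X + 1)) <= 1).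
  { assert (Hh : rho <= / (4 * (X + 1))) by (eapply Rle_trans; [apply Rmin_r| apply Rmin_l]).
    apply (Rmult_le_compat_r (4 * (X + 1))) in Hh; [|lra]. rewrite Rinv_l in Hh; lra. }
  assert (Hrho3 : rho * (2 * (LJ + 1)) <= Rabs jq).
  { assert (Hh : rho <= Rabs jq / (2 * (LJ + 1))) by (eapply Rle_trans; [apply Rmin_r| apply Rmin_r]).
    apply (Rmult_le_compat_r (2 * (LJ + 1))) in Hh; [|lra].
    replace (Rabs jq / (2 * (LJ + 1)) * (2 * (LJ + 1))) with (Rabs jq) in Hh by (field; lra). auto. }
  set (T := fun y => Tmap N M G y).
  assert (Hcontr : forall y z w, nrm N (dv z q) <= rho -> nrm N (dv w q) <= rho ->
            nrm N (dv (T y z) (T y w)) <= / 2 * nrm N (dv z w)).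
  { intros y z w Hz Hw. eapply Rle_trans. apply T_diff; auto; lra.
    pose proof (nrm_nonneg N (dv z q)). pose proof (nrm_nonneg N (dv w q)). pose proof (nrm_nonneg N (dv z w)).
    replace (Mn N M * (INR N * (C * (nrm N (dv z q) + nrm N (dv w q)) * nrm N (dv z w)))) with
      (X * (nrm N (dv z q) + nrm N (dv w q)) * nrm N (dv z w)) by (unfold X, Mn0, nN; ring).
    apply Rmult_le_compat_r; auto. nra. }
  assert (Huniq : forall y z w, nrm N (dv z q) <= rho -> nrm N (dv w q) <= rho ->
            solves N G y z -> solves N G y w -> eqv N z w).
  { intros y z w Hz Hw Sz Sw. apply nrm_zero_eqv.
    assert (nrm N (dv z w) = nrm N (dv (T y z) (T y w))).
    { apply nrm_ext. intros t Ht. unfold dv, T. rewrite !T_fix; auto. }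
    pose proof (Hcontr y z w Hz Hw). pose proof (nrm_nonneg N (dv z w)). lra. }
  assert (Hexist : forall y, Mn0 * nrm N y <= rho / 2 ->
            exists z, nrm N (dv z q) <= 2 * Mn0 * nrm N y /\ solves N G y z).
  { intros y Hy.
    assert (HTq : nrm N (dv (T y q) q) <= Mn0 * nrm N y) by (apply T_q; auto).
    set (U := fun m => Nat.iter m (T y) q).
    assert (Hball : forall m, nrm N (dv (U m) q) <= rho).
    { induction m. simpl. rewrite nrm_self. lra.
      change (U (S m)) with (T y (U m)).
      eapply Rle_trans. apply (nrm_tri N _ (T y q)).
      pose proof (Hcontr y (U m) q IHm ltac:(rewrite nrm_self; lra)). lra. }
    set (D := nrm N (dv (U 1%nat) q)). assert (0 <= D) by apply nrm_nonneg.
    assert (Hstep : forall m, nrm N (dv (U (S m)) (U m)) <= D * (1/2) ^ m).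
    { induction m. simpl. unfold D. simpl. lra.
      eapply Rle_trans. apply (Hcontr y (U (S m)) (U m) (Hball _) (Hball _)).
      simpl pow. lra. }
    assert (Hacc : forall m j, nrm N (dv (U (m + j)%nat) (U m)) <= 2 * D * (1/2) ^ m - 2 * D * (1/2) ^ (m + j)).
    { intros m j. induction j. rewrite Nat.add_0_r, nrm_self. lra.
      rewrite Nat.add_succ_r. eapply Rle_trans. apply (nrm_tri N _ (U (m + j)%nat)).
      pose proof (Hstep (m + j)%nat). change ((1/2)^(S (m+j))) with ((1/2) * (1/2)^(m+j)). lra. }
    assert (Hout : forall m t, (N <= t)%nat -> U m t = q t).
    { induction m; intros t Ht. reflexivity. change (U (S m)) with (T y (U m)).
      unfold T, Tmap. rewrite Rs_zero. rewrite IHm; auto; ring. intros; rewrite HM0; auto; ring. }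
    assert (Hcoord : forall m j t, Rabs (U (m + j)%nat t - U m t) <= 2 * D * (1/2) ^ m).
    { intros m j t. destruct (Nat.lt_ge_cases t N).
      - eapply Rle_trans. apply (coord_le_nrm N (dv (U (m+j)%nat) (U m)) t H5).
        pose proof (Hacc m j). pose proof (half_pow_pos (m + j)). nra.
      - rewrite !Hout; auto. replace (q t - q t) with 0 by ring. rewrite Rabs_R0.
        pose proof (half_pow_pos m). nra. }
    destruct (vec_limit U (2 * D) ltac:(lra) Hcoord) as [Lz HLz].
    assert (HnL : forall m, nrm N (dv (U m) Lz) <= nN * (2 * D) * (1/2) ^ m).
    { intros m. unfold nN. rewrite Rmult_assoc, <- Rs_const. apply Rs_le; intros; apply HLz. }
    assert (HLball : nrm N (dv Lz q) <= rho).
    { apply (vanish _ _ (nN * (2 * D))). nra. intros m.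
      eapply Rle_trans. apply (nrm_tri N _ (U m)). rewrite nrm_sym.
      pose proof (HnL m). pose proof (Hball m). lra. }
    assert (Hfix : eqv N (T y Lz) Lz).
    { apply nrm_zero_eqv. apply (vanish _ _ (nN * (2 * D))). nra. intros m.
      eapply Rle_trans. apply (nrm_tri N _ (T y (U m))).
      pose proof (Hcontr y Lz (U m) HLball (Hball m)) as Hc1.
      pose proof (HnL (S m)) as Hs1. change (U (S m)) with (T y (U m)) in Hs1. pose proof (HnL m) as Hs2. rewrite nrm_sym in Hs2.
      change ((1/2)^(S m)) with ((1/2) * (1/2)^m) in Hs1.
      set (K := nN * (2 * D)) in *. set (pm := (1/2)^m) in *.
      pose proof (half_pow_pos m). nra. }
    exists Lz. split.
    - assert (nrm N (dv Lz q) = nrm N (dv (T y Lz) q)).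
      { apply nrm_ext. intros t Ht. unfold dv. rewrite (Hfix t Ht). reflexivity. }
      pose proof (Hcontr y Lz q HLball ltac:(rewrite nrm_self; lra)).
      pose proof (nrm_tri N (T y Lz) (T y q) q). lra.
    - apply (fix_solves N M G q); auto. }
  set (r := rho / (nN + 1)).
  assert (Hr : r * (nN + 1) = rho) by (unfold r; field; lra).
  assert (Hr0 : 0 < r) by (unfold r; apply Rdiv_lt_0_compat; lra).
  assert (HNr : nN * r <= rho) by nra.
  set (eps := r / (2 * (Mn0 + 1) * (nN + 1))).
  assert (He : eps * (2 * (Mn0 + 1) * (nN + 1)) = r) by (unfold eps; field; lra).
  assert (He0 : 0 < eps) by (unfold eps; apply Rdiv_lt_0_compat; nra).
  assert (He1 : Mn0 * (nN * eps) <= rho / 2) by nra.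
  assert (He2 : 2 * Mn0 * (nN * eps) < r) by nra.
  assert (Hin : forall z, dist2 N z q <= r ^ 2 -> nrm N (dv z q) <= rho).
  { intros z Hz. pose proof (nrm_le_of_dist2 N z q r ltac:(lra) Hz) as Hh. fold nN in Hh. lra. }
  split.
  - split; auto. exists r. split; auto. intros z Hz Hzero.
    apply (Huniq (fun _ => 0) z q); auto. apply Hin; lra. rewrite nrm_self; lra.
  - exists r. split; auto. split.
    { intros z Hz Hzero. apply (Huniq (fun _ => 0) z q); auto. rewrite nrm_self; lra. }
    exists eps. split; auto. intros y Hy _ zs Hzs Hnd.
    assert (Hny : nrm N y <= nN * eps).
    { pose proof (nrm_le_of_dist2 N y (fun _ => 0) eps ltac:(lra) ltac:(lra)).
      rewrite <- (nrm_ext N (dv y (fun _ => 0))). auto. intros; unfold dv; ring. }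
    destruct (Hexist y) as [zst [Hzb Hzs']].
    { eapply Rle_trans. 2: apply He1. apply Rmult_le_compat_l; auto. }
    assert (Hzr : dist2 N zst q < r ^ 2).
    { eapply Rle_lt_trans. apply dist2_le_nrm. pose proof (nrm_nonneg N (dv zst q)).
      assert (nrm N (dv zst q) < r) by nra. nra. }
    assert (Hall : forall w, In w zs -> eqv N w zst /\ dist2 N w q < r ^ 2).
    { intros w Hw. destruct (proj2 (Hzs w)) as [Hw1 Hw2]. exists w; split; auto. intros t _; auto.
      split; auto. apply (Huniq y); auto. apply Hin; lra. apply Hin; lra. }
    destruct (proj1 (Hzs zst) (conj Hzr Hzs')) as [w0 [Hw0 _]].
    destruct zs as [|w1 [|w2 zs']].
    + destruct Hw0.
    + simpl. rewrite Z.add_0_r. apply sgnZ_close.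
      destruct (Hall w1 (or_introl eq_refl)) as [_ Hd].
      assert (nrm N (dv w1 q) <= rho) by (apply Hin; lra).
      eapply Rle_lt_trans. apply HlipJ; lra. fold jq. nra.
    + exfalso. inversion Hnd as [|? ? HF HFO]; subst. inversion HF as [|? ? HF1 HF2]; subst.
      destruct (Hall w1 (or_introl eq_refl)) as [E1 _].
      destruct (Hall w2 (or_intror (or_introl eq_refl))) as [E2 _].
      apply HF1. intros t Ht. rewrite E1, E2; auto.
Qed.

Module Alg.
From HB Require Import structures.
From mathcomp Require Import all_boot all_order all_algebra.
From mathcomp Require Import Rstruct.
Import Order.TTheory GRing.Theory Num.Theory.

Local Open Scope ring_scope.

Lemma RsumE n (f : nat -> R) : Rsum n f = \sum_(i < n) f i.
Proof.
  elim: n => [|n IH]; first by rewrite big_ord0.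
  by rewrite Rs_S big_ord_recr /= IH.
Qed.

Lemma even_odd j : Nat.even j = ~~ odd j.
Proof.
  elim: j => [|j IH] //. rewrite Nat.even_succ -Nat.negb_even IH /=. by case: (odd j).
Qed.

Lemma RdetE n : forall A : nat -> nat -> R, Rdet n A = \det (\matrix_(i < n, j < n) A i j).
Proof.
  elim: n => [|n IH] A; first by rewrite det_mx00.
  rewrite Rdet_S RsumE (expand_det_row _ ord0). apply: eq_bigr => j _.
  rewrite /cofactor mxE.
  have -> : row' ord0 (col' j (\matrix_(i < n.+1, j0 < n.+1) A i j0)) =
            \matrix_(r < n, c < n) minor A j r c.
    apply/matrixP => r c; rewrite !mxE /minor /=.
    congr (A _ _). rewrite /bump /=.
    case: (ltnP c j) => H.
    - have -> : Nat.ltb c j = true by apply/Nat.ltb_lt/ssrnat.ltP.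
      by [].
    - have -> : Nat.ltb c j = false by apply/Nat.ltb_ge/ssrnat.leP.
      by [].
  rewrite -IH /= add0n even_odd -signr_odd. case: (odd j) => /=; rewrite ?RoppE ?RmultE.
  - by rewrite expr1 mulN1r mulrN.
  - by rewrite expr0 mul1r.
Qed.

Lemma eqb_eqn (i j : nat) : Nat.eqb i j = (i == j).
Proof. by case: (Nat.eqb_spec i j) => [->|H]; [rewrite eqxx | case: eqP]. Qed.

Lemma inv_exists N (J : nat -> nat -> R) : Rdet N J <> R0 ->
  exists M : nat -> nat -> R,
   (forall i j, lt i N -> lt j N ->
      Rsum N (fun t => Rmult (M i t) (J t j)) = if Nat.eqb i j then R1 else R0) /\
   (forall i j, lt i N -> lt j N ->
      Rsum N (fun t => Rmult (J i t) (M t j)) = if Nat.eqb i j then R1 else R0) /\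
   (forall t i, le N t -> M t i = R0).
Proof.
  case: N => [|n] HJ.
  { exists (fun _ _ => R0). split; [|split]; move=> i j Hi; try lia. by []. }
  set Jm := \matrix_(i < n.+1, j < n.+1) J i j.
  have Hu : Jm \in unitmx.
    by rewrite unitmxE unitfE -RdetE; apply/eqP.
  set Mi := invmx Jm.
  exists (fun i j => if (i < n.+1)%N then Mi (inord i) (inord j) else R0).
  split; [|split].
  - move=> i j /ssrnat.ltP Hi /ssrnat.ltP Hj. rewrite RsumE.
    have E : (if Nat.eqb i j then R1 else R0) = ((inord i == inord j :> 'I_n.+1)%:R).
      by rewrite -(inj_eq val_inj) /= !inordK // eqb_eqn; case: (i == j).
    rewrite E.
    have := mulVmx Hu. move/matrixP/(_ (inord i) (inord j)). rewrite !mxE => <-.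
    rewrite Hi. apply: eq_bigr => t _. rewrite !mxE inord_val inordK //.
  - move=> i j /ssrnat.ltP Hi /ssrnat.ltP Hj. rewrite RsumE.
    have E : (if Nat.eqb i j then R1 else R0) = ((inord i == inord j :> 'I_n.+1)%:R).
      by rewrite -(inj_eq val_inj) /= !inordK // eqb_eqn; case: (i == j).
    rewrite E.
    have := mulmxV Hu. move/matrixP/(_ (inord i) (inord j)). rewrite !mxE => <-.
    apply: eq_bigr => t _. rewrite !mxE ltn_ord inord_val inordK //.
  - move=> t i /ssrnat.leP Ht. by rewrite ltnNge Ht.
Qed.

Lemma ltb_ltn (a b : nat) : Nat.ltb a b = (a < b)%N.
Proof. case: (Nat.ltb_spec a b) => H; apply/esym. by apply/ssrnat.ltP. by apply/negbTE; rewrite -leqNgt; apply/ssrnat.leP. Qed.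

Lemma sgE K : sg K = (-1) ^+ K.
Proof. rewrite /sg even_odd -signr_odd. by case: (odd K) => /=; rewrite ?expr1 ?expr0. Qed.

Lemma rowsum_det K (X D : nat -> nat -> R) (c : nat -> R) :
  c 0%N = R1 ->
  (forall u, le u K -> Rsum (S K) (fun v => Rmult (X u v) (c v)) = R0) ->
  Rsum (S K) (fun s => Rdet (S K) (fun u v => if Nat.eqb u s then D u v else X u v)) =
  Rmult (sg K) (Rdet (S K) (fun u v => if Nat.ltb v K then X u (S v)
                                       else Rsum (S K) (fun w => Rmult (D u w) (c w)))).
Proof.
  move=> Hc0 HXc.
  set E := \matrix_(i < K.+1, j < K.+1) (if (j < K)%N then ((i == j.+1 :> nat)%:R : R) else c i).
  have detE : \det E = (-1) ^+ K.
    rewrite (expand_det_row _ ord0) big_ord_recr /= big1; last first.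
      move=> j _. rewrite !mxE /= ltn_ord /=. by rewrite mul0r.
    rewrite add0r !mxE /= ltnn Hc0 mul1r /cofactor add0n.
    have -> : row' ord0 (col' ord_max E) = 1%:M.
      apply/matrixP => i j. rewrite !mxE /= /bump leq0n (leqNgt K j) ltn_ord /= add0n ltn_ord.
      by [].
    by rewrite det1 mulr1.
  set Z := \matrix_(u < K.+1, v < K.+1) (if Nat.ltb v K then X u (S v)
                                       else Rsum (S K) (fun w => Rmult (D u w) (c w))).
  set Dc := fun s : nat => Rsum (S K) (fun w => Rmult (D s w) (c w)).
  have key : forall s : 'I_K.+1,
      \det (\matrix_(u < K.+1, v < K.+1) (if Nat.eqb u s then D u v else X u v)) * (-1) ^+ K
      = Dc s * cofactor Z s ord_max.
    move=> s. set Ys := \matrix_(u < K.+1, v < K.+1) (if Nat.eqb u s then D u v else X u v).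
    rewrite -detE -det_mulmx (expand_det_col _ ord_max) (bigD1 s) //= big1; last first.
      move=> u Hu. rewrite !mxE.
      have -> : \sum_j Ys u j * E j ord_max = Rsum (S K) (fun v => Rmult (X u v) (c v)).
        rewrite RsumE. apply: eq_bigr => w _. rewrite !mxE /= ltnn.
        by rewrite eqb_eqn val_eqE (negbTE Hu).
      by rewrite HXc ?mul0r //; apply/ssrnat.leP; rewrite -ltnS ltn_ord.
    rewrite addr0. congr (_ * _).
      rewrite !mxE /Dc RsumE. apply: eq_bigr => w _. by rewrite !mxE /= ltnn eqb_eqn eqxx.
    rewrite /cofactor. congr (_ * _). congr (\det _). apply/matrixP => i j.
    have Hj : (j < K)%N := ltn_ord j.
    have HbK : bump K j = j by rewrite /bump leqNgt Hj.
    rewrite !mxE lift_max ltb_ltn Hj.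
    rewrite (bigD1 (lift ord0 j)) //= big1; last first.
      move=> w Hw. rewrite !mxE /= HbK Hj. case: eqP => H; last by rewrite mulr0.
      by exfalso; move/eqP: Hw; apply; apply/val_inj.
    rewrite !mxE /= HbK Hj eqxx mulr1 addr0 eqb_eqn.
    have -> : (bump s i == s) = false.
      by apply/negbTE; rewrite eq_sym; apply: neq_bump.
    by [].
  rewrite RsumE.
  have -> : \sum_(s < K.+1) Rdet K.+1 (fun u v => if Nat.eqb u s then D u v else X u v)
         = \sum_(s < K.+1) (-1) ^+ K * (Dc s * cofactor Z s ord_max).
    apply: eq_bigr => s _. rewrite RdetE -(key s).
    by rewrite [_ * (-1) ^+ K]mulrC mulrA -expr2 -exprM mulnC exprM sqrrN !expr1n mul1r.
  rewrite -mulr_sumr RdetE sgE. congr (_ * _).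
  rewrite (expand_det_col _ ord_max). apply: eq_bigr => s _. by rewrite !mxE ltb_ltn ltnn.
Qed.

Definition schurC (K : nat) (G : nat -> nat -> R) (r l : nat) : R :=
  G (K + r)%N (K + l)%N -
  \sum_(v < K) (\sum_(u < K) G (K + r)%N u * invmx (\matrix_(i < K, j < K) G i j) u v) * G v (K + l)%N.

Lemma block_eq m n (f : nat -> nat -> R) :
  \matrix_(i < m + n, j < m + n) f i j =
  block_mx (\matrix_(i < m, j < m) f i j) (\matrix_(i < m, j < n) f i (m + j)%N)
           (\matrix_(i < n, j < m) f (m + i)%N j) (\matrix_(i < n, j < n) f (m + i)%N (m + j)%N).
Proof.
  apply/matrixP => i j. rewrite -(splitK i) -(splitK j).
  case: (split i) => a; case: (split j) => b /=;
  rewrite ?(block_mxEul, block_mxEur, block_mxEdl, block_mxEdr) !mxE //.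
Qed.

Lemma schur K N (G : nat -> nat -> R) : Rdet K G <> R0 ->
  Rdet (Nat.add K N) G = Rmult (Rdet K G) (Rdet N (schurC K G)).
Proof.
  move=> HG.
  set Ga := \matrix_(i < K, j < K) G i j.
  have Hu : Ga \in unitmx by rewrite unitmxE unitfE -RdetE; apply/eqP.
  have -> : Nat.add K N = (K + N)%N by [].
  rewrite !RdetE block_eq.
  set Gb := \matrix_(i < K, j < N) G i (K + j)%N.
  set Gc := \matrix_(i < N, j < K) G (K + i)%N j.
  set Gd := \matrix_(i < N, j < N) G (K + i)%N (K + j)%N.
  have E : block_mx Ga Gb Gc Gd *m block_mx 1%:M (- (invmx Ga *m Gb)) 0 1%:M
           = block_mx Ga 0 Gc (Gd - Gc *m invmx Ga *m Gb).
    rewrite mulmx_block !mulmx1 !mulmx0 !addr0 !mulmxN mulmxA mulmxV // mul1mx addNr.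
    by rewrite addrC mulmxA.
  rewrite -/Ga. have := congr1 determinant E. rewrite det_mulmx det_ublock !det1 !mulr1 => ->.
  rewrite det_lblock. congr (_ * _). congr (\det _). apply/matrixP => r l.
  rewrite !mxE /schurC. congr (_ - _). apply: eq_bigr => v _. rewrite !mxE. congr (_ * _).
  apply: eq_bigr => u _. by rewrite !mxE.
Qed.

Lemma schur_bord K (G : nat -> nat -> R) r l : Rdet K G <> R0 ->
  Rdet (S K) (fun i j => G (if Nat.ltb i K then i else Nat.add K r) (if Nat.ltb j K then j else Nat.add K l))
  = Rmult (Rdet K G) (schurC K G r l).
Proof.
  move=> HG. set G' := fun i j => _.
  have HKK : Rdet K G' = Rdet K G.
    apply: Rdet_ext => i j /ssrnat.ltP Hi /ssrnat.ltP Hj. by rewrite /G' !ltb_ltn Hi Hj.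
  have -> : S K = Nat.add K 1 by rewrite Nat.add_1_r.
  rewrite schur; last by rewrite HKK.
  rewrite HKK Rdet_1. congr (_ * _).
  have HGa : \matrix_(i < K, j < K) G' i j = \matrix_(i < K, j < K) G i j.
    apply/matrixP => i j. rewrite !mxE /G' !ltb_ltn. have := ltn_ord i. have := ltn_ord j. by move=> -> ->.
  rewrite /schurC HGa /G' !ltb_ltn !addn0 ltnn. congr (_ - _).
  apply: eq_bigr => v _. rewrite ltb_ltn ltn_ord. congr (_ * _). apply: eq_bigr => u _.
  by rewrite ltb_ltn ltn_ord.
Qed.

End Alg.


Lemma peval_prename x f P : peval x (prename f P) = peval (fun u => x (f u)) P.
Proof. induction P; simpl; try rewrite IHP1, IHP2; try rewrite IHP; auto. Qed.

Lemma pderiv_prename_low x f t P : (forall j, f j <> t) -> peval x (pderiv t (prename f P)) = 0.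
Proof.
  intros Hf. induction P; simpl; try rewrite IHP1, IHP2; try rewrite IHP; try ring.
  destruct (Nat.eqb_spec t (f i)). exfalso; apply (Hf i); auto. reflexivity.
Qed.

Lemma pderiv_prename_shift l K P :
  pderiv (l + K) (prename (fun u => (u + K)%nat) P) = prename (fun u => (u + K)%nat) (pderiv l P).
Proof.
  induction P; simpl; try rewrite IHP1, IHP2; try rewrite IHP; auto.
  destruct (Nat.eqb_spec (l + K) (i + K)), (Nat.eqb_spec l i); try lia; reflexivity.
Qed.

Lemma poly_in_prename M M' f P : poly_in M P -> (forall j, (j < M)%nat -> (f j < M')%nat) ->
  poly_in M' (prename f P).
Proof. intros H Hf; induction P; simpl in *; intuition. Qed.

Lemma sgnZ_mul x y : sgnZ (x * y) = (sgnZ x * sgnZ y)%Z.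
Proof.
  unfold sgnZ.
  destruct (Rlt_dec 0 x), (Rlt_dec x 0), (Rlt_dec 0 y), (Rlt_dec y 0);
  destruct (Rlt_dec 0 (x * y)), (Rlt_dec (x * y) 0); try reflexivity; try lra;
  try (exfalso; nra).
  all: try (assert (x = 0) by lra; subst; rewrite Rmult_0_l in *; lra).
  all: try (assert (y = 0) by lra; subst; rewrite Rmult_0_r in *; lra).
Qed.

Lemma sgnZ_pos w : 0 < w -> sgnZ w = 1%Z.
Proof. intros; unfold sgnZ; destruct (Rlt_dec 0 w); [reflexivity| lra]. Qed.

Lemma sgnZ_sg K : sgnZ (sg K) = ((-1) ^ Z.of_nat K)%Z.
Proof.
  induction K. unfold sg, sgnZ; simpl. destruct (Rlt_dec 0 1); [reflexivity| lra].
  rewrite Nat2Z.inj_succ, Z.pow_succ_r by lia. rewrite <- IHK. unfold sg, sgnZ.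
  rewrite Nat.even_succ, <- Nat.negb_even. destruct (Nat.even K); simpl;
  repeat (destruct Rlt_dec); try reflexivity; lra.
Qed.

Lemma negpow_sq K : (((-1) ^ Z.of_nat K) * ((-1) ^ Z.of_nat K))%Z = 1%Z.
Proof. rewrite <- Z.pow_mul_l. simpl. apply Z.pow_1_l. lia. Qed.

Lemma sg_sq K : sg K * sg K = 1.
Proof. unfold sg; destruct (Nat.even K); ring. Qed.

Definition Aent (a : nat -> nat -> mpoly) p i t := peval p (a i (S t)).
Definition Bent K (a : nat -> nat -> mpoly) p (lam : nat -> R) i l :=
  peval p (pderiv l (a i O)) + Rsum K (fun j => lam j * peval p (pderiv l (a i (S j)))).
Definition Gent K a p lam i t := if Nat.ltb t K then Aent a p i t else Bent K a p lam i (t - K).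

Lemma join_shift K lam p u : join_pt (S K) lam p (u + K) = p u.
Proof.
  unfold join_pt. replace (S K - 1)%nat with K by lia.
  destruct (Nat.ltb_spec (u + K) K). lia. f_equal; lia.
Qed.

Lemma join_low K lam p j : (j < K)%nat -> join_pt (S K) lam p j = lam j.
Proof.
  intros H. unfold join_pt. replace (S K - 1)%nat with K by lia.
  destruct (Nat.ltb_spec j K). auto. lia.
Qed.

Lemma peval_sh K lam p P :
  peval (join_pt (S K) lam p) (prename (fun u => (u + (S K - 1))%nat) P) = peval p P.
Proof.
  replace (S K - 1)%nat with K by lia. rewrite peval_prename. apply peval_ext. intros; apply join_shift.
Qed.

Lemma peval_shK K lam p P :
  peval (join_pt (S K) lam p) (prename (fun u => (u + K)%nat) P) = peval p P.
Proof. rewrite peval_prename. apply peval_ext. intros; apply join_shift. Qed.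

Lemma F_entry K a p lam i t :
  peval (join_pt (S K) lam p) (pderiv t (F_poly (S K) a i)) = Gent K a p lam i t.
Proof.
  unfold F_poly, Gent. replace (S K - 1)%nat with K by lia. cbv zeta.
  change (pderiv t (PAdd ?x ?y)) with (PAdd (pderiv t x) (pderiv t y)).
  change (peval ?z (PAdd ?x ?y)) with (peval z x + peval z y).
  rewrite peval_pderiv_gsum.
  destruct (Nat.ltb_spec t K).
  - rewrite pderiv_prename_low by (intros; lia).
    rewrite (Rs_ext K _ (fun j => if Nat.eqb j t then Aent a p i j else 0)).
    rewrite Rs_delta by auto. ring.
    intros j Hj. simpl. rewrite pderiv_prename_low by (intros; lia).
    rewrite peval_prename. unfold Aent.
    rewrite (peval_ext (fun u => join_pt (S K) lam p (u + K)%nat) p) by (intros; apply join_shift).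
    rewrite Nat.eqb_sym. destruct (Nat.eqb j t); simpl; ring.
  - assert (exists l, t = (l + K)%nat) as [l ->] by (exists (t - K)%nat; lia).
    replace (l + K - K)%nat with l by lia.
    rewrite pderiv_prename_shift, peval_prename.
    rewrite (peval_ext (fun u => join_pt (S K) lam p (u + K)%nat) p) by (intros; apply join_shift).
    unfold Bent. f_equal. apply Rs_ext. intros j Hj. simpl.
    destruct (Nat.eqb_spec (l + K) j). lia.
    rewrite pderiv_prename_shift, !peval_shK. rewrite join_low by auto. simpl. ring.
Qed.

Theorem lemma10 (n k : nat) (a : nat -> nat -> mpoly) (p lam : nat -> R) :
  (2 <= k)%nat -> (k <= n)%nat -> Nat.Even (n - k) ->
  (forall i j, (i < n)%nat -> (j < k)%nat -> poly_in (n - k + 1) (a i j)) ->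
  (exists c : nat -> R,
      (exists j, (j < k)%nat /\ c j <> 0) /\
      forall i, (i < n)%nat -> Rsum k (fun j => peval p (a i j) * c j) = 0) ->
  peval p (m_poly k a) <> 0 ->
  (forall i, (i < n)%nat ->
      peval p (a i O) + Rsum (k - 1) (fun j => lam j * peval p (a i (S j))) = 0) ->
  peval p (delta_poly n k a) <> 0 ->
  isolated_zero n (F_poly k a) (join_pt k lam p) /\
  local_degree n (F_poly k a) (join_pt k lam p)
    (((-1) ^ Z.of_nat (k - 1)) * sgnZ (peval p (delta_poly n k a)))%Z.
Proof.
  intros Hk Hkn Hev Hpoly _ Hm Hlam Hdelta.
  destruct k as [|K]; [lia|].
  assert (HK1 : (S K - 1)%nat = K) by lia.
  rewrite HK1 in Hlam |- *.
  set (N := (n - S K + 1)%nat) in *.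
  assert (HnN : n = (K + N)%nat) by (unfold N; lia).
  set (q := join_pt (S K) lam p).
  set (G := F_poly (S K) a).
  set (Gm := Gent K a p lam).
  set (m := Rdet K Gm).
  assert (Hmm : peval p (m_poly (S K) a) = m).
  { unfold m_poly. rewrite HK1, peval_Pdet. apply Rdet_ext. intros r c Hr Hc.
    unfold Gm, Gent. destruct (Nat.ltb_spec c K); [reflexivity | lia]. }
  rewrite Hmm in Hm.
  assert (Hjac : jac n G q = Rdet n Gm).
  { unfold jac. apply Rdet_ext. intros i t _ _. apply F_entry. }
  set (s := Rdet N (Alg.schurC K Gm)).
  assert (Hjac2 : jac n G q = m * s).
  { rewrite Hjac, HnN. apply Alg.schur. exact Hm. }
  set (Gb := fun r l i j => Gm (if Nat.ltb i K then i else (K + r)%nat) (if Nat.ltb j K then j else (K + l)%nat)).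
  assert (Hdl : peval p (delta_poly n (S K) a) = Rdet N (fun r l => sg K * Rdet (S K) (Gb r l))).
  { unfold delta_poly. fold N. rewrite peval_Pdet. apply Rdet_ext. intros r l Hr Hl.
    unfold Defs.Delta. rewrite HK1, peval_pderiv_Pdet.
    rewrite (Alg.rowsum_det K (fun u v => peval p (a (if Nat.ltb u K then u else (K + r)%nat) v))
        (fun u v => peval p (pderiv l (a (if Nat.ltb u K then u else (K + r)%nat) v)))
        (fun v => match v with O => 1 | S j => lam j end)).
    - f_equal. apply Rdet_ext. intros u v Hu Hv. unfold Gb, Gm, Gent.
      destruct (Nat.ltb_spec v K).
      + replace (Nat.ltb v K) with true by (symmetry; apply Nat.ltb_lt; auto). reflexivity.
      + assert (v = K) by lia. subst v. destruct (Nat.ltb_spec (K + l) K). lia.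
        replace (K + l - K)%nat with l by lia. unfold Bent. rewrite Rs_S_l.
        f_equal. simpl; ring. apply Rs_ext; intros; simpl; ring.
    - reflexivity.
    - intros u Hu. rewrite Rs_S_l. simpl.
      set (row := if Nat.ltb u K then u else (K + r)%nat).
      assert (row < n)%nat by (unfold row; destruct (Nat.ltb_spec u K); lia).
      transitivity (peval p (a row 0%nat) + Rsum K (fun j => lam j * peval p (a row (S j)))).
      rewrite Rmult_1_r; f_equal; apply Rs_ext; intros; ring. apply (Hlam row H). }
  assert (Hdl2 : peval p (delta_poly n (S K) a) = (sg K * m) ^ N * s).
  { rewrite Hdl. unfold s. rewrite <- Rdet_scal. apply Rdet_ext. intros r l _ _.
    unfold Gb. rewrite Alg.schur_bord by exact Hm. fold m. ring. }
  destruct Hev as [h Hh].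
  assert (HN : N = (2 * h + 1)%nat) by (unfold N; lia).
  set (w := ((sg K * m) ^ 2) ^ h).
  assert (Hsg : sg K <> 0) by (unfold sg; destruct (Nat.even K); lra).
  assert (Hw : 0 < w).
  { unfold w. apply pow_lt. assert (sg K * m <> 0) by (apply Rmult_integral_contrapositive; auto).
    nra. }
  assert (Hdl3 : peval p (delta_poly n (S K) a) = sg K * jac n G q * w).
  { rewrite Hdl2, Hjac2, HN, pow_add, pow_mult. unfold w. ring. }
  assert (Hjac0 : jac n G q <> 0).
  { intros E. rewrite Hdl3, E in Hdelta. apply Hdelta; ring. }
  assert (Hsign : ((-1) ^ Z.of_nat K * sgnZ (peval p (delta_poly n (S K) a)))%Z = sgnZ (jac n G q)).
  { rewrite Hdl3, !sgnZ_mul. rewrite (sgnZ_pos w Hw). rewrite sgnZ_sg.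
    rewrite Z.mul_1_r, Z.mul_assoc, negpow_sq. ring. }
  rewrite Hsign.
  destruct (Alg.inv_exists n (Jm G q)) as [M [HMJ [HJM HM0]]].
  { exact Hjac0. }
  apply (local_deg_generic n G q M).
  - intros i Hi. unfold G, F_poly. rewrite HK1. cbv zeta. simpl. split.
    + apply (poly_in_prename N). apply Hpoly; lia. intros; lia.
    + apply poly_in_gsum. intros j Hj. simpl. split. lia.
      apply (poly_in_prename N). apply Hpoly; lia. intros; lia.
  - intros i Hi. unfold G, F_poly, q. rewrite HK1. cbv zeta.
    change (peval ?z (PAdd ?x ?y)) with (peval z x + peval z y).
    rewrite peval_gsum, peval_shK. rewrite <- (Hlam i Hi). f_equal.
    apply Rs_ext. intros j Hj. simpl. rewrite peval_shK, join_low by auto. reflexivity.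
  - exact Hjac0.
  - exact HMJ.
  - exact HJM.
  - exact HM0.
Qed.
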